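(* Let $A$ and $B$ be two $n\times n\times n$ alternating sign hypermatrices. Then $L(A)=L(B)$ if and only if $A-B$ can be expressed as a sum of pairs of T-blocks, where the two T-blocks in each pair have opposite depth and occupy the same vertical lines.
   Context: An $n\times n\times n$ hypermatrix $A=[a_{ijk}]$ has row lines $A_{*jk}=[a_{ijk}: i=1,\dots,n]$, column lines $A_{i*k}=[a_{ijk}: j=1,\dots,n]$ and vertical lines $A_{ij*}=[a_{ijk}: k=1,\dots,n]$. An alternating sign hypermatrix (ASHM) is an $n\times n\times n$ hypermatrix with entries in $\{0,1,-1\}$ such that in every row line, column line and vertical line the non-zero entries alternate in sign, starting and ending with $+1$. The $k$-th plane of $A$ is $P_k(A)=[a_{ijk}]_{i,j=1}^n$, and $L(A)=\sum_{k=1}^n k\,P_k(A)$. For indices $i_1<i_2$, $j_1<j_2$, $k_1<k_2$, the hypermatrix $T_{i_1,j_1,k_1:\,i_2,j_2,k_2}=[t_{ijk}]$ has $t_{ijk}=1$ for $(i,j,k)\in\{(i_1,j_1,k_1),(i_2,j_2,k_1),(i_2,j_1,k_2),(i_1,j_2,k_2)\}$, $t_{ijk}=-1$ for $(i,j,k)\in\{(i_2,j_1,k_1),(i_1,j_2,k_1),(i_1,j_1,k_2),(i_2,j_2,k_2)\}$, and $0$ otherwise. A T-block is a hypermatrix $T=\pm T_{i_1,j_1,k_1:\,i_2,j_2,k_2}$; its depth is $d(T)=k_2-k_1$ if $T=T_{i_1,j_1,k_1:\,i_2,j_2,k_2}$ and $d(T)=k_1-k_2$ if $T=-T_{i_1,j_1,k_1:\,i_2,j_2,k_2}$.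 Two T-blocks $T_1,T_2$ have opposite depth if $d(T_1)=-d(T_2)$. A T-block $\pm T_{i_1,j_1,k_1:\,i_2,j_2,k_2}$ occupies the vertical lines at positions $(i_1,j_1),(i_1,j_2),(i_2,j_1),(i_2,j_2)$. *)

(* Defs.v *)
From mathcomp Require Import all_boot all_order all_algebra.
Set Implicit Arguments. Unset Strict Implicit. Unset Printing Implicit Defensive.
Import GRing.Theory Num.Theory.
Local Open Scope ring_scope.

(* An n x n x n hypermatrix with integer entries; indices are 'I_n
   (0-based: paper index i corresponds to ordinal i-1). *)
Definition hmx (n : nat) := 'I_n -> 'I_n -> 'I_n -> int.

Definition alt_sign_line (s : seq int) : bool :=
  let t := [seq x <- s | x != 0] in
  [&& t == mkseq (fun m => (-1) ^+ m) (size t) & odd (size t)].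

Definition row_line n (A : hmx n) (j k : 'I_n) : seq int := [seq A i j k | i <- enum 'I_n].
Definition col_line n (A : hmx n) (i k : 'I_n) : seq int := [seq A i j k | j <- enum 'I_n].
Definition vert_line n (A : hmx n) (i j : 'I_n) : seq int := [seq A i j k | k <- enum 'I_n].

Definition is_ASHM n (A : hmx n) : Prop :=
  (forall i j k, A i j k \in [:: 0; 1; -1]) /\
  (forall j k, alt_sign_line (row_line A j k)) /\
  (forall i k, alt_sign_line (col_line A i k)) /\
  (forall i j, alt_sign_line (vert_line A i j)).

(* L(A) = sum_k k P_k(A), paper index k = ordinal k + 1. *)
Definition Lmx n (A : hmx n) (i j : 'I_n) : int :=
  \sum_(k < n) (k.+1)%:Z * A i j k.

Definition Tbase n (i1 j1 k1 i2 j2 k2 : 'I_n) : hmx n := fun i j k =>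
  if (i, j, k) \in [:: (i1, j1, k1); (i2, j2, k1); (i2, j1, k2); (i1, j2, k2)] then 1
  else if (i, j, k) \in [:: (i2, j1, k1); (i1, j2, k1); (i1, j1, k2); (i2, j2, k2)] then -1
  else 0.

(* Data of a (candidate) T-block: tsign = true means +T_{..}, false means -T_{..}. *)
Record tblock (n : nat) := TBlock {
  tsign : bool;
  ti1 : 'I_n; tj1 : 'I_n; tk1 : 'I_n;
  ti2 : 'I_n; tj2 : 'I_n; tk2 : 'I_n }.

Definition tblock_valid n (T : tblock n) : bool :=
  [&& ti1 T < ti2 T, tj1 T < tj2 T & tk1 T < tk2 T]%N.

Definition tmx n (T : tblock n) : hmx n := fun i j k =>
  (if tsign T then 1 else -1) *
  Tbase (ti1 T) (tj1 T) (tk1 T) (ti2 T) (tj2 T) (tk2 T) i j k.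

Definition depth n (T : tblock n) : int :=
  if tsign T then (tk2 T)%:Z - (tk1 T)%:Z else (tk1 T)%:Z - (tk2 T)%:Z.

Definition opposite_depth n (T1 T2 : tblock n) : bool := depth T1 == - depth T2.

Definition occupies n (T : tblock n) : {set 'I_n * 'I_n} :=
  [set (ti1 T, tj1 T); (ti1 T, tj2 T); (ti2 T, tj1 T); (ti2 T, tj2 T)].

Definition good_pair n (p : tblock n * tblock n) : bool :=
  [&& tblock_valid p.1, tblock_valid p.2, opposite_depth p.1 p.2
    & occupies p.1 == occupies p.2].

(* Main.v *)
Require Import Defs.
From mathcomp Require Import all_boot all_order all_algebra.
From mathcomp Require Import zify ring lra.
Set Implicit Arguments. Unset Strict Implicit. Unset Printing Implicit Defensive.
Import GRing.Theory Num.Theory.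
Local Open Scope ring_scope.

Definition ind (b : bool) : int := if b then 1 else 0.

Lemma Tbase_prod n (i1 j1 k1 i2 j2 k2 a b c : 'I_n) : i1 != i2 -> j1 != j2 -> k1 != k2 ->
  Tbase i1 j1 k1 i2 j2 k2 a b c =
  (ind (a == i1) - ind (a == i2)) * (ind (b == j1) - ind (b == j2)) *
  (ind (c == k1) - ind (c == k2)).
Proof.
move=> hi hj hk; rewrite /Tbase !inE !xpair_eqE.
have Ha : ~~ ((a == i1) && (a == i2)).
  by apply/negP => /andP[/eqP e1 /eqP e2]; rewrite -e1 -e2 eqxx in hi.
have Hb : ~~ ((b == j1) && (b == j2)).
  by apply/negP => /andP[/eqP e1 /eqP e2]; rewrite -e1 -e2 eqxx in hj.
have Hc : ~~ ((c == k1) && (c == k2)).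
  by apply/negP => /andP[/eqP e1 /eqP e2]; rewrite -e1 -e2 eqxx in hk.
move: (a == i1) (a == i2) (b == j1) (b == j2) (c == k1) (c == k2) Ha Hb Hc.
by do 6 case.
Qed.

Definition gen n (F : hmx n) := exists ps : seq (tblock n * tblock n),
  all (@good_pair n) ps /\
  forall i j k, F i j k = \sum_(p <- ps) (tmx p.1 i j k + tmx p.2 i j k).

Lemma gen_ext n (F G : hmx n) : (forall i j k, F i j k = G i j k) -> gen F -> gen G.
Proof. by move=> e [ps [h1 h2]]; exists ps; split=> // i j k; rewrite -e. Qed.

Lemma gen0 n : gen (fun _ _ _ : 'I_n => 0).
Proof. by exists [::]; split=> // i j k; rewrite big_nil. Qed.

Lemma genD n (F G : hmx n) : gen F -> gen G -> gen (fun i j k => F i j k + G i j k).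
Proof.
move=> [ps [h1 h2]] [qs [h3 h4]]; exists (ps ++ qs); split; first by rewrite all_cat h1 h3.
by move=> i j k; rewrite big_cat /= h2 h4.
Qed.

Definition negT n (T : tblock n) :=
  TBlock (~~ tsign T) (ti1 T) (tj1 T) (tk1 T) (ti2 T) (tj2 T) (tk2 T).

Lemma tmx_neg n (T : tblock n) i j k : tmx (negT T) i j k = - tmx T i j k.
Proof. by rewrite /tmx /=; case: (tsign T); rewrite ?mulN1r ?mul1r ?opprK. Qed.

Lemma depth_neg n (T : tblock n) : depth (negT T) = - depth T.
Proof. by rewrite /depth /=; case: (tsign T) => //=; rewrite opprB. Qed.

Lemma genN n (F : hmx n) : gen F -> gen (fun i j k => - F i j k).
Proof.
move=> [ps [h1 h2]]; exists [seq (negT p.1, negT p.2) | p <- ps]; split.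
  rewrite all_map; apply: sub_all h1 => -[T1 T2] /and4P[v1 v2 o e].
  by apply/and4P; split=> //=; rewrite /opposite_depth !depth_neg (eqP o).
move=> i j k; rewrite big_map h2 -sumrN; apply: eq_bigr => p _.
by rewrite /= !tmx_neg opprD.
Qed.

Lemma genZ n (F : hmx n) (c : int) : gen F -> gen (fun i j k => c * F i j k).
Proof.
move=> g.
have P : forall m : nat, gen (fun i j k => m%:Z * F i j k).
  elim=> [|m IH]; first by apply: gen_ext (gen0 n) => i j k; rewrite mul0r.
  apply: gen_ext (genD g IH) => i j k; rewrite -addn1 PoszD mulrDl mul1r addrC.
  done.
case: c => m; first exact: P.
apply: gen_ext (genN (P m.+1)) => i j k; by rewrite NegzE mulNr.
Qed.

Lemma gen_sum n (I : finType) (P : pred I) (F : I -> hmx n) :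
  (forall x, P x -> gen (F x)) -> gen (fun a b c => \sum_(x | P x) F x a b c).
Proof.
move=> h; elim: (index_enum I) => [|x s IH].
  by apply: gen_ext (gen0 n) => a b c; rewrite big_nil.
case Px: (P x).
  by apply: gen_ext (genD (h x Px) IH) => a b c; rewrite big_cons Px.
by apply: gen_ext IH => a b c; rewrite big_cons Px.
Qed.

Lemma sum_ind n (f : 'I_n -> int) (k0 : 'I_n) : \sum_(k < n) f k * ind (k == k0) = f k0.
Proof.
rewrite (bigD1 k0) //= eqxx mulr1 big1 ?addr0 // => k /negbTE ->.
by rewrite mulr0.
Qed.

Definition Eij n (T : tblock n) (i j : 'I_n) : int :=
  (ind (i == ti1 T) - ind (i == ti2 T)) * (ind (j == tj1 T) - ind (j == tj2 T)).

Lemma L_tmx n (T : tblock n) i j : tblock_valid T ->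
  \sum_(k < n) (k.+1)%:Z * tmx T i j k = - depth T * Eij T i j.
Proof.
case/and3P => hi hj hk.
have ne : forall x y : 'I_n, (x < y)%N -> x != y.
  by move=> x y h; apply/eqP => e; rewrite e ltnn in h.
transitivity (\sum_(k < n) ((k.+1)%:Z * ((if tsign T then 1 else -1) * Eij T i j)) * ind (k == tk1 T)
  - \sum_(k < n) ((k.+1)%:Z * ((if tsign T then 1 else -1) * Eij T i j)) * ind (k == tk2 T)).
  rewrite -sumrB; apply: eq_bigr => k _.
  rewrite /tmx Tbase_prod ?ne // /Eij.
  move: (k.+1)%:Z (if _ then _ else _) (ind _) (ind _) (ind _) (ind _) (ind _) (ind _) => *; ring.
rewrite !sum_ind /depth.
move: (Eij T i j) => e; case: (tsign T); rewrite !intS; ring.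
Qed.

Lemma occ_fst n (T : tblock n) x y : (x, y) \in occupies T ->
  (x == ti1 T :> nat) || (x == ti2 T :> nat).
Proof.
rewrite !inE !xpair_eqE !val_eqE.
by case: (x == ti1 T); case: (x == ti2 T); rewrite //= ?andbF ?orbT.
Qed.

Lemma occ_snd n (T : tblock n) x y : (x, y) \in occupies T ->
  (y == tj1 T :> nat) || (y == tj2 T :> nat).
Proof.
rewrite !inE !xpair_eqE !val_eqE.
by case: (y == tj1 T); case: (y == tj2 T); rewrite //= ?andbF ?orbT.
Qed.

Lemma occ_eq n (T1 T2 : tblock n) : good_pair (T1, T2) -> Eij T1 =2 Eij T2.
Proof.
case/and4P => /= /and3P[a1 b1 _] /and3P[a2 b2 _] _ /eqP o i j.
have q1 : (ti1 T1, tj1 T1) \in occupies T2 by rewrite -o !inE eqxx.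
have q2 : (ti2 T1, tj2 T1) \in occupies T2 by rewrite -o !inE eqxx ?orbT.
have q3 : (ti1 T2, tj1 T2) \in occupies T1 by rewrite o !inE eqxx.
have q4 : (ti2 T2, tj2 T2) \in occupies T1 by rewrite o !inE eqxx ?orbT.
have e1 : ti1 T1 = ti1 T2 /\ ti2 T1 = ti2 T2.
  move: (occ_fst q1) (occ_fst q2) (occ_fst q3) (occ_fst q4).
  by move=> /orP[/eqP ?|/eqP ?] /orP[/eqP ?|/eqP ?] /orP[/eqP ?|/eqP ?] /orP[/eqP ?|/eqP ?];
    split; apply: ord_inj; lia.
have e3 : tj1 T1 = tj1 T2 /\ tj2 T1 = tj2 T2.
  move: (occ_snd q1) (occ_snd q2) (occ_snd q3) (occ_snd q4).
  by move=> /orP[/eqP ?|/eqP ?] /orP[/eqP ?|/eqP ?] /orP[/eqP ?|/eqP ?] /orP[/eqP ?|/eqP ?];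
    split; apply: ord_inj; lia.
case: e1 => e1 e2; case: e3 => e3 e4.
by rewrite /Eij e1 e2 e3 e4.
Qed.

Lemma backward n (A B : hmx n) (ps : seq (tblock n * tblock n)) :
  all (@good_pair n) ps ->
  (forall i j k, A i j k - B i j k = \sum_(p <- ps) (tmx p.1 i j k + tmx p.2 i j k)) ->
  forall i j, Lmx A i j = Lmx B i j.
Proof.
move=> hg h i j; apply/eqP; rewrite -subr_eq0; apply/eqP.
rewrite /Lmx -sumrB.
under eq_bigr do rewrite -mulrBr h mulr_sumr.
rewrite exchange_big /=.
elim: ps {h} hg => [|[T1 T2] s IH]; rewrite ?big_nil ?big_cons // => /andP[hp' hs].
rewrite IH // addr0 /=.
under eq_bigr do rewrite mulrDr.
rewrite big_split /=.
case/and4P: (hp') => v1 v2 /eqP od _.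
rewrite !L_tmx // (occ_eq hp') od; ring.
Qed.

Lemma alt_iota (N : nat) : \sum_(x <- mkseq (fun m => (-1) ^+ m) N) x = (odd N)%:Z :> int.
Proof.
rewrite /mkseq big_map.
have -> : iota 0 N = index_iota 0 N by rewrite /index_iota subn0.
rewrite big_mkord; elim: N => [|N IH]; first by rewrite big_ord0.
rewrite big_ord_recr /= IH -signr_odd; case: (odd N) => /=; rewrite ?expr0 ?expr1 //.
Qed.

Lemma alt_sum (s : seq int) : alt_sign_line s -> \sum_(x <- s) x = 1.
Proof.
rewrite /alt_sign_line => /andP[/eqP ht ho].
have -> : \sum_(x <- s) x = \sum_(x <- [seq x <- s | x != 0]) x.
  rewrite big_filter [RHS]big_mkcond; apply: eq_bigr => x _; case: eqP => // ->.
by rewrite ht alt_iota ho.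
Qed.

Lemma line_sum n (f : 'I_n -> int) :
  \sum_(x <- [seq f i | i <- enum 'I_n]) x = \sum_i f i.
Proof. by rewrite big_map enumT. Qed.

Definition Em n' (i j a b : 'I_n'.+1) : int :=
  (ind (a == i) - ind (a == ord_max)) * (ind (b == j) - ind (b == ord_max)).
Definition uv (k x : nat) : int :=
  ind (x == 0)%N - ind (x == k.-1)%N - ind (x == 1)%N + ind (x == k)%N.
Definition wv (m x : nat) : int :=
  ind (x == m)%N - m%:Z * ind (x == 1)%N + (m%:Z - 1) * ind (x == 0)%N.

Lemma eq_inord n' (x : 'I_n'.+1) m : (m < n'.+1)%N -> (x == inord m) = (x == m :> nat).
Proof. by move=> h; rewrite -val_eqE /= inordK. Qed.

Lemma lt_max n' (i : 'I_n'.+1) : i != ord_max -> (i < n')%N.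
Proof. move=> h; have := ltn_ord i; move: h; rewrite -val_eqE /=; lia. Qed.

Lemma gen_pair n' (i j : 'I_n'.+1) (k : nat) : i != ord_max -> j != ord_max ->
  (k.+2 < n'.+1)%N -> gen (fun a b x => Em i j a b * uv k.+2 x).
Proof.
move=> hi hj hk; have li := lt_max hi; have lj := lt_max hj.
exists [:: (TBlock true i j (inord 0) ord_max ord_max (inord k.+1),
            TBlock false i j (inord 1) ord_max ord_max (inord k.+2))]; split.
  rewrite /= andbT /good_pair /tblock_valid /opposite_depth /depth /= eqxx andbT !inordK //;
    try lia.
move=> a b x; rewrite big_cons big_nil addr0 /tmx /=.
rewrite !Tbase_prod; last first.
- by rewrite -val_eqE /= !inordK //; lia.
- by rewrite -val_eqE /=; lia.
- by rewrite -val_eqE /=; lia.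
- by rewrite -val_eqE /= !inordK //; lia.
- by rewrite -val_eqE /=; lia.
- by rewrite -val_eqE /=; lia.
rewrite !eq_inord //; try lia.
rewrite /Em /uv /=.
move: (ind _) (ind _) (ind _) (ind _) (ind _) (ind _) (ind _) (ind _) => *; ring.
Qed.

Lemma gen_w n' (i j : 'I_n'.+1) (m : nat) : i != ord_max -> j != ord_max ->
  (m < n'.+1)%N -> gen (fun a b x => Em i j a b * wv m x).
Proof.
move=> hi hj; elim: m => [|m IH] hm.
  apply: gen_ext (gen0 _) => a b x; rewrite /wv.
  move: (ind _) (Em _ _ _ _) => *; ring.
case: m IH hm => [|m] IH hm.
  apply: gen_ext (gen0 _) => a b x; rewrite /wv.
  move: (ind _) (ind _) (Em _ _ _ _) => *; ring.
apply: gen_ext (genD (IH (ltnW hm)) (gen_pair hi hj hm)) => a b x.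
rewrite /wv /uv /= !intS.
move: (ind _) (ind _) (ind _) (ind _) (Em _ _ _ _) (Posz m) => *; ring.
Qed.

Lemma vec_dec n (v : 'I_n -> int) (x : 'I_n) :
  \sum_(m < n) v m = 0 -> \sum_(m < n) (nat_of_ord m)%:Z * v m = 0 ->
  \sum_(m < n | (2 <= m)%N) v m * wv m x = v x.
Proof.
move=> h0 h1.
have E : forall m : 'I_n, v m * wv m x = v m * ind (nat_of_ord x == nat_of_ord m)
   - ((nat_of_ord m)%:Z * v m) * ind (nat_of_ord x == 1)%N + (((nat_of_ord m)%:Z - 1) * v m) * ind (nat_of_ord x == 0)%N.
  move=> m; rewrite /wv; move: (ind _) (ind _) (ind _) (Posz _) (v m) => *; ring.
under eq_bigr do rewrite E.
rewrite big_split sumrB /= -!mulr_suml.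
have S : forall F : 'I_n -> int, \sum_(m < n | (2 <= m)%N) F m = \sum_(m < n) F m - \sum_(m < n | ~~ (2 <= m)%N) F m.
  by move=> F; rewrite [in RHS](bigID (fun m : 'I_n => (2 <= m)%N)) /= addrK.
have T : forall F : 'I_n -> int, (nat_of_ord x < 2)%N ->
    (forall m : 'I_n, (nat_of_ord m < 2)%N -> m != x -> F m = 0) ->
    \sum_(m < n | ~~ (2 <= m)%N) F m = F x.
  move=> F hx hF; rewrite (bigD1 x) /=; last by rewrite -ltnNge.
  rewrite big1 ?addr0 // => m /andP[hm hne]; apply: hF => //; rewrite ltnNge.
  done.
have [x2|x2] := leqP 2 x.
  have -> : (nat_of_ord x == 1)%N = false by apply/negbTE; lia.
  have -> : (nat_of_ord x == 0)%N = false by apply/negbTE; lia.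
  rewrite !mulr0 subr0 addr0 (bigD1 x) //= eqxx mulr1 big1 ?addr0 // => m /andP[_ ne].
  suff -> : (nat_of_ord x == nat_of_ord m) = false by rewrite mulr0.
  by apply/negbTE; rewrite val_eqE eq_sym.
rewrite big1 ?sub0r; last first.
  move=> m hm; suff -> : (nat_of_ord x == nat_of_ord m) = false by rewrite mulr0.
  by apply/negbTE; lia.
have [x1|x1] := eqVneq (nat_of_ord x) 1%N.
  rewrite x1 /= mulr0 addr0 mulr1 S h1 sub0r opprK (T _ x2) ?x1 ?mul1r //.
  move=> m hm hne; suff -> : nat_of_ord m = 0%N by rewrite mul0r.
  have : nat_of_ord m <> nat_of_ord x by move=> e; move/eqP: hne; apply; apply: ord_inj.
  lia.
have x0 : nat_of_ord x = 0%N by lia.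
rewrite x0 /= mulr0 oppr0 add0r mulr1 S.
have -> : \sum_(m < n) ((nat_of_ord m)%:Z - 1) * v m = 0.
  under eq_bigr do rewrite mulrBl mul1r.
  by rewrite sumrB h1 h0 subr0.
rewrite (T _ x2) ?x0 ?sub0r /=; first by rewrite mulN1r opprK.
move=> m hm hne; suff -> : nat_of_ord m = 1%N by rewrite subrr mul0r.
have : nat_of_ord m <> nat_of_ord x by move=> e; move/eqP: hne; apply; apply: ord_inj.
lia.
Qed.

Lemma sum_delta n' (a : 'I_n'.+1) (f : 'I_n'.+1 -> int) :
  \sum_(i < n'.+1 | i != ord_max) (ind (a == i) - ind (a == ord_max)) * f i =
  if a == ord_max then - \sum_(i < n'.+1 | i != ord_max) f i else f a.
Proof.
under eq_bigr do rewrite mulrBl.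
rewrite sumrB -mulr_sumr.
case: eqVneq => [->|na].
  rewrite big1 ?sub0r ?mul1r // => i hi.
  by rewrite eq_sym (negbTE hi) mul0r.
rewrite mul0r subr0 (bigD1 a) //= eqxx mul1r big1 ?addr0 // => i /andP[_ ne].
by rewrite eq_sym (negbTE ne) mul0r.
Qed.

Lemma mat_dec n' (X : 'I_n'.+1 -> 'I_n'.+1 -> int) a b :
  (forall i, \sum_j X i j = 0) -> (forall j, \sum_i X i j = 0) ->
  \sum_(i < n'.+1 | i != ord_max) \sum_(j < n'.+1 | j != ord_max) Em i j a b * X i j = X a b.
Proof.
move=> hr hc.
have rowN : forall i, \sum_(j < n'.+1 | j != ord_max) X i j = - X i ord_max.
  move=> i; have := hr i; rewrite (bigD1 ord_max) //= => e.
  by apply/eqP; rewrite -addr_eq0 addrC e.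
have colN : forall j, \sum_(i < n'.+1 | i != ord_max) X i j = - X ord_max j.
  move=> j; have := hc j; rewrite (bigD1 ord_max) //= => e.
  by apply/eqP; rewrite -addr_eq0 addrC e.
rewrite /Em.
under eq_bigr do under eq_bigr do rewrite -mulrA.
under eq_bigr do rewrite -mulr_sumr sum_delta.
rewrite sum_delta.
case: (eqVneq b ord_max) => [->|nb]; case: (eqVneq a ord_max) => [->|na]; rewrite ?eqxx /=.
- rewrite sumrN opprK.
  under eq_bigr do rewrite rowN.
  by rewrite sumrN colN opprK.
- by rewrite rowN opprK.
- by rewrite colN opprK.
- done.
Qed.

Lemma ashm_sums n (A : hmx n) : is_ASHM A ->
  [/\ forall j k, \sum_i A i j k = 1, forall i k, \sum_j A i j k = 1
    & forall i j, \sum_k A i j k = 1].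
Proof.
case=> _ [hr [hc hv]]; split.
- by move=> j k; rewrite -line_sum; apply: alt_sum; apply: hr.
- by move=> i k; rewrite -line_sum; apply: alt_sum; apply: hc.
- by move=> i j; rewrite -line_sum; apply: alt_sum; apply: hv.
Qed.

Unset Implicit Arguments.
Theorem theorem2p8 (n : nat) (A B : hmx n) :
  is_ASHM A -> is_ASHM B ->
  ((forall i j : 'I_n, Lmx A i j = Lmx B i j) <->
   exists ps : seq (tblock n * tblock n),
     all (@good_pair n) ps /\
     forall i j k : 'I_n,
       A i j k - B i j k = \sum_(p <- ps) (tmx p.1 i j k + tmx p.2 i j k)).
Proof.
move=> hA hB; split; last by case=> ps [h1 h2]; exact: backward h1 h2.
move=> hL.
case: n A B hA hB hL => [|n'] A B hA hB hL.
  by exists [::]; split => // [[]].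
case: (ashm_sums hA) => rA cA vA; case: (ashm_sums hB) => rB cB vB.
pose D i j k := A i j k - B i j k.
have rD : forall j k, \sum_i D i j k = 0 by move=> j k; rewrite /D sumrB rA rB subrr.
have cD : forall i k, \sum_j D i j k = 0 by move=> i k; rewrite /D sumrB cA cB subrr.
have vD : forall i j, \sum_k D i j k = 0 by move=> i j; rewrite /D sumrB vA vB subrr.
have wD : forall i j, \sum_(k < n'.+1) (nat_of_ord k)%:Z * D i j k = 0.
  move=> i j; have e : \sum_(k < n'.+1) (k.+1)%:Z * D i j k = 0.
    rewrite /D; under eq_bigr do rewrite mulrBr.
    by rewrite sumrB; apply/eqP; rewrite subr_eq0; apply/eqP; exact: hL i j.
  transitivity (\sum_(k < n'.+1) (k.+1)%:Z * D i j k - \sum_(k < n'.+1) D i j k);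
    last by rewrite e vD subr0.
  rewrite -sumrB; apply: eq_bigr => k _.
  by rewrite /D intS; move: (A i j k) (B i j k) (Posz k) => *; ring.
have G : gen (fun a b x => \sum_(i < n'.+1 | i != ord_max) \sum_(j < n'.+1 | j != ord_max)
   \sum_(m < n'.+1 | (2 <= m)%N) D i j m * (Em i j a b * wv m x)).
  apply: gen_sum => i hi; apply: gen_sum => j hj; apply: gen_sum => m hm.
  by apply: genZ; apply: gen_w.
have : gen D.
  apply: gen_ext G => a b x.
  under eq_bigr do under eq_bigr do
    (under eq_bigr do rewrite mulrCA; rewrite -mulr_sumr (vec_dec (v := fun m => D _ _ m)) //).
  by rewrite mat_dec.
by case=> ps [h1 h2]; exists ps; split.
Qed.
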